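(* The rational map $\mathbb{P}^2 \dashrightarrow \mathbb{P}^3$, $(r:s:t)\mapsto(w:x:y:z)$ with \begin{align*} w &= t^3-2t^2s-2tsr+ts^2+r^2s-r^3-rs^2,\\ x &= -t^3-2t^2s+ts^2-2tsr+2rs^2-s^3+r^3-2r^2s,\\ y &= 2t^3+3t^2r-2t^2s-2tsr+3tr^2+ts^2+2rs^2-s^3+r^3-2r^2s,\\ z &= -2t^3+t^2s-3t^2r-3tr^2+4tsr-2ts^2-r^3+r^2s-rs^2, \end{align*} defined over $\mathbb{Q}$, is a birational map from $\mathbb{P}^2$ onto the cubic surface $S_1: w^3 + x^3 = y^3 + z^3$. For this parametrization, $w^3+x^3$ factors over $\mathbb{Q}$ as a product of one linear, two quadratic and one quartic polynomial in $r,s,t$.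
   Context: No additional context. *)

(* Defs.v *)
From HB Require Import structures.
From mathcomp Require Import all_boot all_order all_algebra.
From mathcomp Require Import mpoly.
Set Implicit Arguments. Unset Strict Implicit. Unset Printing Implicit Defensive.
Import Order.TTheory GRing.Theory Num.Theory.
Local Open Scope ring_scope.

Definition r_ : {mpoly rat[3]} := 'X_0.
Definition s_ : {mpoly rat[3]} := 'X_1.
Definition t_ : {mpoly rat[3]} := 'X_2.

Definition wP : {mpoly rat[3]} :=
  t_^+3 - 2%:R*t_^+2*s_ - 2%:R*t_*s_*r_ + t_*s_^+2 + r_^+2*s_ - r_^+3 - r_*s_^+2.
Definition xP : {mpoly rat[3]} :=
  - t_^+3 - 2%:R*t_^+2*s_ + t_*s_^+2 - 2%:R*t_*s_*r_ + 2%:R*r_*s_^+2 - s_^+3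
  + r_^+3 - 2%:R*r_^+2*s_.
Definition yP : {mpoly rat[3]} :=
  2%:R*t_^+3 + 3%:R*t_^+2*r_ - 2%:R*t_^+2*s_ - 2%:R*t_*s_*r_ + 3%:R*t_*r_^+2
  + t_*s_^+2 + 2%:R*r_*s_^+2 - s_^+3 + r_^+3 - 2%:R*r_^+2*s_.
Definition zP : {mpoly rat[3]} :=
  - 2%:R*t_^+3 + t_^+2*s_ - 3%:R*t_^+2*r_ - 3%:R*t_*r_^+2 + 4%:R*t_*s_*r_
  - 2%:R*t_*s_^+2 - r_^+3 + r_^+2*s_ - r_*s_^+2.

Definition param : 4.-tuple {mpoly rat[3]} := [tuple wP; xP; yP; zP].

Definition S1form : {mpoly rat[4]} :=
  'X_0^+3 + 'X_1^+3 - 'X_2^+3 - 'X_3^+3.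

(* A rational map P^(n-1) --> P^(m-1) given by forms F (all of degree e) is
   birational onto the (irreducible) hypersurface {C = 0} of P^(m-1), over K,
   iff its image lies in {C = 0} and there is an inverse rational map
   G : {C = 0} --> P^(n-1) given by forms of a common degree d over K, with
   G o F = lam * id  (lam a nonzero form, i.e. identity on a dense open), and
   F o G = mu * id  modulo C, where mu does not vanish identically on {C = 0}
   (i.e. C does not divide mu). *)
Definition birational_onto_hypersurface (K : fieldType) (n m : nat)
    (F : m.-tuple {mpoly K[n]}) (C : {mpoly K[m]}) : Prop :=
  (exists e, forall j, tnth F j \is e.-homog) /\
  C \mPo F = 0 /\
  exists (d : nat) (G : n.-tuple {mpoly K[m]}) (lam : {mpoly K[n]})
         (mu : {mpoly K[m]}),
    [/\ forall i, tnth G i \is d.-homog,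
        lam != 0,
        ~ (exists q, mu = q * C),
        forall i, tnth G i \mPo F = lam * 'X_i
      & forall j, exists q, tnth F j \mPo G - mu * 'X_j = q * C].

(* Irreducibility in the multivariate polynomial ring over a field:
   non-constant, and any factorization has a constant factor (a unit). *)
Definition mirreducible (K : fieldType) (n : nat) (p : {mpoly K[n]}) : Prop :=
  (1 < msize p)%N /\
  forall a b : {mpoly K[n]}, p = a * b -> (msize a <= 1)%N \/ (msize b <= 1)%N.

(* Main.v *)
Require Import Defs.
From HB Require Import structures.
From mathcomp Require Import all_boot all_order all_algebra.
From mathcomp Require Import mpoly.
From mathcomp Require Import ring lra zify.
Import Order.TTheory GRing.Theory Num.Theory.
Local Open Scope ring_scope.

Definition W4 : {mpoly rat[4]} := 'X_0.
Definition X4 : {mpoly rat[4]} := 'X_1.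
Definition Y4 : {mpoly rat[4]} := 'X_2.
Definition Z4 : {mpoly rat[4]} := 'X_3.
Definition G0 : {mpoly rat[4]} := - W4^+2 + W4*X4 + W4*Y4 - W4*Z4 + X4*Z4 - Z4^+2.
Definition G1 : {mpoly rat[4]} := - W4^+2 - W4*Z4 + X4^+2 + X4*Y4 + Y4^+2 - Z4^+2.
Definition G2 : {mpoly rat[4]} := - W4*X4 + Y4*Z4.
Definition lam : {mpoly rat[3]} := - 6%:R*r_^+5 + 15%:R*r_^+4*s_ - 15%:R*r_^+4*t_ - 24%:R*r_^+3*s_^+2 + 30%:R*r_^+3*s_*t_ - 24%:R*r_^+3*t_^+2 + 21%:R*r_^+2*s_^+3 - 36%:R*r_^+2*s_^+2*t_ + 36%:R*r_^+2*s_*t_^+2 - 21%:R*r_^+2*t_^+3 - 12%:R*r_*s_^+4 + 21%:R*r_*s_^+3*t_ - 36%:R*r_*s_^+2*t_^+2 + 21%:R*r_*s_*t_^+3 - 12%:R*r_*t_^+4 + 3%:R*s_^+5 - 6%:R*s_^+4*t_ + 12%:R*s_^+3*t_^+2 - 12%:R*s_^+2*t_^+3 + 6%:R*s_*t_^+4 - 3%:R*t_^+5.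
Definition mu : {mpoly rat[4]} := 3%:R*W4^+5 - 4%:R*W4^+4*X4 - 5%:R*W4^+4*Y4 + 6%:R*W4^+4*Z4 + 2%:R*W4^+3*X4^+2 + 2%:R*W4^+3*X4*Y4 - 7%:R*W4^+3*X4*Z4 + 2%:R*W4^+3*Y4^+2 - 8%:R*W4^+3*Y4*Z4 + 8%:R*W4^+3*Z4^+2 - 3%:R*W4^+2*X4^+2*Y4 + 3%:R*W4^+2*X4^+2*Z4 - 3%:R*W4^+2*X4*Y4^+2 + 3%:R*W4^+2*X4*Y4*Z4 - 9%:R*W4^+2*X4*Z4^+2 - 3%:R*W4^+2*Y4^+3 + 3%:R*W4^+2*Y4^+2*Z4 - 9%:R*W4^+2*Y4*Z4^+2 + 6%:R*W4^+2*Z4^+3 - W4*X4^+4 + 4%:R*W4*X4^+3*Y4 + 9%:R*W4*X4^+2*Y4^+2 - 3%:R*W4*X4^+2*Y4*Z4 + 3%:R*W4*X4^+2*Z4^+2 + 10%:R*W4*X4*Y4^+3 - 3%:R*W4*X4*Y4^+2*Z4 + 3%:R*W4*X4*Y4*Z4^+2 - 5%:R*W4*X4*Z4^+3 + 5%:R*W4*Y4^+4 - 3%:R*W4*Y4^+3*Z4 + 3%:R*W4*Y4^+2*Z4^+2 - 4%:R*W4*Y4*Z4^+3 + 3%:R*W4*Z4^+4 - X4^+5 - 4%:R*X4^+4*Y4 + 2%:R*X4^+4*Z4 - 7%:R*X4^+3*Y4^+2 + 7%:R*X4^+3*Y4*Z4 - X4^+3*Z4^+2 - 8%:R*X4^+2*Y4^+3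 + 9%:R*X4^+2*Y4^+2*Z4 - 3%:R*X4^+2*Y4*Z4^+2 + X4^+2*Z4^+3 - 5%:R*X4*Y4^+4 + 7%:R*X4*Y4^+3*Z4 - 3%:R*X4*Y4^+2*Z4^+2 + X4*Y4*Z4^+3 - 2%:R*X4*Z4^+4 - 2%:R*Y4^+5 + 2%:R*Y4^+4*Z4 - 2%:R*Y4^+3*Z4^+2 + Y4^+2*Z4^+3 - Y4*Z4^+4 + Z4^+5.
Definition q0 : {mpoly rat[4]} := - 2%:R*W4^+3 + 3%:R*W4^+2*X4 + 3%:R*W4^+2*Y4 - 3%:R*W4^+2*Z4 - W4*X4^+2 - W4*X4*Y4 + 3%:R*W4*X4*Z4 - W4*Y4^+2 + 3%:R*W4*Y4*Z4 - 2%:R*W4*Z4^+2 - X4^+2*Z4 - X4*Y4*Z4 + 2%:R*X4*Z4^+2 - Y4^+2*Z4 + Y4*Z4^+2 - Z4^+3.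
Definition q1 : {mpoly rat[4]} := - W4^+2*X4 + W4^+2*Y4 + 2%:R*W4*X4^+2 - W4*X4*Z4 - 2%:R*W4*Y4^+2 + W4*Y4*Z4 + X4^+2*Y4 + X4*Y4^+2 - 2%:R*X4*Y4*Z4 + Y4^+3 - Y4^+2*Z4 + Y4*Z4^+2.
Definition q2 : {mpoly rat[4]} := - W4^+2*X4 - 2%:R*W4^+2*Y4 + W4*X4^+2 + 5%:R*W4*X4*Y4 - W4*X4*Z4 + 3%:R*W4*Y4^+2 - 2%:R*W4*Y4*Z4 - X4^+3 - 2%:R*X4^+2*Y4 + 2%:R*X4^+2*Z4 - 2%:R*X4*Y4^+2 + 3%:R*X4*Y4*Z4 - X4*Z4^+2 - Y4^+3 + Y4^+2*Z4 - Y4*Z4^+2.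
Definition q3 : {mpoly rat[4]} := W4^+3 - W4^+2*X4 - 2%:R*W4^+2*Y4 + W4*X4^+2 + W4*X4*Y4 + W4*Y4^+2.
Definition Q1 : {mpoly rat[3]} := r_^+2 - r_*s_ + 4%:R*r_*t_ + s_^+2 - 2%:R*s_*t_ + 4%:R*t_^+2.
Definition Q2 : {mpoly rat[3]} := r_^+2 - r_*s_ - 2%:R*r_*t_ + s_^+2 + s_*t_ + t_^+2.
Definition Q4 : {mpoly rat[3]} := 3%:R*r_^+4 - 6%:R*r_^+3*s_ + 6%:R*r_^+3*t_ + 7%:R*r_^+2*s_^+2 - 9%:R*r_^+2*s_*t_ + 9%:R*r_^+2*t_^+2 - 4%:R*r_*s_^+3 + 7%:R*r_*s_^+2*t_ - 9%:R*r_*s_*t_^+2 + 6%:R*r_*t_^+3 + s_^+4 - 2%:R*s_^+3*t_ + 4%:R*s_^+2*t_^+2 - 3%:R*s_*t_^+3 + 3%:R*t_^+4.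
Definition Gt : 3.-tuple {mpoly rat[4]} := [tuple G0; G1; G2].

Lemma homM (n d e k : nat) (p q : {mpoly rat[n]}) :
  (d + e)%N = k -> p \is d.-homog -> q \is e.-homog -> p * q \is k.-homog.
Proof. by move=> <-; apply: dhomogM. Qed.

Lemma homX (n d k e : nat) (p : {mpoly rat[n]}) :
  (d * k)%N = e -> p \is d.-homog -> p ^+ k \is e.-homog.
Proof. by move=> <-; apply: dhomogMn. Qed.

Lemma homXi (n : nat) (i : 'I_n) : ('X_i : {mpoly rat[n]}) \is 1.-homog.
Proof. by rewrite dhomogX /= mdeg1. Qed.

Lemma homC (n : nat) (k : nat) : (k%:R : {mpoly rat[n]}) \is 0.-homog.
Proof. by apply: rpredMn; apply: dhomog1. Qed.

Ltac degof p :=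
  lazymatch p with
  | ?a * ?b => let x := degof a in let y := degof b in constr:((x + y)%N)
  | ?a ^+ ?k => let x := degof a in constr:((x * k)%N)
  | ?a + ?b => degof a
  | ?a - ?b => degof a
  | - ?a => degof a
  | _%:R => constr:(0%N)
  | _ => constr:(1%N)
  end.

Ltac homt :=
  lazymatch goal with
  | |- is_true (?a + ?b \in _) => apply: rpredD; homt
  | |- is_true (?a - ?b \in _) => apply: rpredB; homt
  | |- is_true (- ?a \in _) => rewrite rpredN; homt
  | |- is_true (?a * ?b \in _) =>
      let x := degof a in let y := degof b in
      apply: (@homM _ x y); [reflexivity | homt | homt]
  | |- is_true (?a ^+ ?k \in _) =>
      let x := degof a in apply: (@homX _ x k); [reflexivity | homt]
  | |- is_true (_%:R \in _) => apply: homC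
  | |- _ => apply: homXi
  end.


Section CR.
Context (n k : nat) (lq : n.-tuple {mpoly rat[k]}).
Implicit Types p q : {mpoly rat[n]}.
Lemma cM p q : (p * q) \mPo lq = (p \mPo lq) * (q \mPo lq).
Proof. exact: rmorphM. Qed.
Lemma cX p m : (p ^+ m) \mPo lq = (p \mPo lq) ^+ m.
Proof. exact: rmorphXn. Qed.
Lemma cN (m : nat) : (m%:R : {mpoly rat[n]}) \mPo lq = m%:R.
Proof. exact: rmorph_nat. Qed.
End CR.
Definition cR := (comp_mpolyD, comp_mpolyB, comp_mpolyN, cM, cX, cN).

Lemma S1_param : S1form \mPo param = 0.
Proof.
rewrite /S1form !cR !comp_mpolyXU /=.
rewrite /wP /xP /yP /zP. Time ring.
Qed.

Lemma hom_w : wP \is 3.-homog.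
Proof. rewrite /wP /r_ /s_ /t_. homt. Qed.
Lemma hom_x : xP \is 3.-homog.
Proof. rewrite /xP /r_ /s_ /t_. homt. Qed.
Lemma hom_y : yP \is 3.-homog.
Proof. rewrite /yP /r_ /s_ /t_. homt. Qed.
Lemma hom_z : zP \is 3.-homog.
Proof. rewrite /zP /r_ /s_ /t_. homt. Qed.
Lemma hom_G0 : G0 \is 2.-homog.
Proof. rewrite /G0 /W4 /X4 /Y4 /Z4. homt. Qed.
Lemma hom_G1 : G1 \is 2.-homog.
Proof. rewrite /G1 /W4 /X4 /Y4 /Z4. homt. Qed.
Lemma hom_G2 : G2 \is 2.-homog.
Proof. rewrite /G2 /W4 /X4 /Y4 /Z4. homt. Qed.
Lemma hom_L : - s_ \is 1.-homog.
Proof. rewrite /s_. homt. Qed.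
Lemma hom_Q1 : Q1 \is 2.-homog.
Proof. rewrite /Q1 /r_ /s_ /t_. homt. Qed.
Lemma hom_Q2 : Q2 \is 2.-homog.
Proof. rewrite /Q2 /r_ /s_ /t_. homt. Qed.
Lemma hom_Q4 : Q4 \is 4.-homog.
Proof. rewrite /Q4 /r_ /s_ /t_. homt. Qed.
Lemma G0_param : G0 \mPo param = lam * 'X_0.
Proof.
rewrite /G0 /W4 /X4 /Y4 /Z4 !cR !comp_mpolyXU /=.
rewrite /wP /xP /yP /zP /lam -/r_ -/s_ -/t_. ring.
Qed.
Lemma G1_param : G1 \mPo param = lam * 'X_1.
Proof.
rewrite /G1 /W4 /X4 /Y4 /Z4 !cR !comp_mpolyXU /=.
rewrite /wP /xP /yP /zP /lam -/r_ -/s_ -/t_. ring.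
Qed.
Lemma G2_param : G2 \mPo param = lam * 'X_2.
Proof.
rewrite /G2 /W4 /X4 /Y4 /Z4 !cR !comp_mpolyXU /=.
rewrite /wP /xP /yP /zP /lam -/r_ -/s_ -/t_. ring.
Qed.
Lemma w_G : wP \mPo Gt - mu * W4 = q0 * S1form.
Proof.
rewrite /wP /r_ /s_ /t_ !cR !comp_mpolyXU /=.
rewrite /S1form /G0 /G1 /G2 /mu /q0 -/W4 -/X4 -/Y4 -/Z4. ring.
Qed.
Lemma x_G : xP \mPo Gt - mu * X4 = q1 * S1form.
Proof.
rewrite /xP /r_ /s_ /t_ !cR !comp_mpolyXU /=.
rewrite /S1form /G0 /G1 /G2 /mu /q1 -/W4 -/X4 -/Y4 -/Z4. ring.
Qed.
Lemma y_G : yP \mPo Gt - mu * Y4 = q2 * S1form.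
Proof.
rewrite /yP /r_ /s_ /t_ !cR !comp_mpolyXU /=.
rewrite /S1form /G0 /G1 /G2 /mu /q2 -/W4 -/X4 -/Y4 -/Z4. ring.
Qed.
Lemma z_G : zP \mPo Gt - mu * Z4 = q3 * S1form.
Proof.
rewrite /zP /r_ /s_ /t_ !cR !comp_mpolyXU /=.
rewrite /S1form /G0 /G1 /G2 /mu /q3 -/W4 -/X4 -/Y4 -/Z4. ring.
Qed.
Lemma fact : wP ^+ 3 + xP ^+ 3 = (- s_) * Q1 * Q2 * Q4.
Proof. rewrite /wP /xP /Q1 /Q2 /Q4. ring. Qed.
Lemma no_sqrt27 (z : rat) : z ^+ 2 != 27%:R.
Proof.
apply/eqP => hz.
set n := numq z; set d := denq z.
have d0 : d != 0 by rewrite denq_neq0.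
have e : (n ^+ 2 = 27%:R * d ^+ 2)%R.
  apply/eqP; rewrite -(eqr_int rat); apply/eqP.
  rewrite rmorphXn rmorphM /= rmorphXn /=.
  have -> : (n%:~R : rat) = z * d%:~R.
    by rewrite -[in RHS](divq_num_den z) mulfVK // intr_eq0.
  by rewrite exprMn hz; congr (_ * _).
have e2 : (`|n| ^ 2 = 27 * `|d| ^ 2)%N.
  have := congr1 absz e; rewrite abszM !abszX /=.
  by [].
have dp : (0 < `|d|)%N by rewrite absz_gt0.
have np : (0 < `|n|)%N.
  rewrite absz_gt0; apply/eqP => h0; move: e; rewrite h0 expr0n /= => /esym /eqP.
  by rewrite mulf_eq0 expf_eq0 /= (negbTE d0).
have := congr1 (logn 3) e2.
rewrite lognM ?expn_gt0 ?dp // !lognX.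
have -> : logn 3 27 = 3%N by [].
lia.
Qed.

Lemma quartic_no33 (a0 a1 a2 b0 b1 b2 : rat) :
  a0 * b0 = 1 -> a0 * b1 + a1 * b0 = 0 -> a0 * b2 + a1 * b1 + a2 * b0 = 9%:R ->
  a1 * b2 + a2 * b1 = 0 -> a2 * b2 = 27%:R -> False.
Proof.
move=> e0 e1 e2 e3 e4.
have h : b1 * (a2 * b0 - a0 * b2) = b0 * (a1 * b2 + a2 * b1) - b2 * (a0 * b1 + a1 * b0) by ring.
rewrite e1 e3 !mulr0 subrr in h.
have b2n : b2 != 0 by apply/eqP => b0'; move: e4; rewrite b0' mulr0 => /eqP; rewrite eq_sym.
have hp : (a0 * b2) * (a2 * b0) = 27%:R by rewrite -e4 -[RHS]mul1r -e0; ring.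
move/eqP: h; rewrite mulf_eq0 => /orP [/eqP hb1 | ].
- move: e3; rewrite hb1 mulr0 addr0 => /eqP; rewrite mulf_eq0 (negbTE b2n) orbF => /eqP ha1.
  move: e2; rewrite ha1 hb1 !mul0r addr0 => e2.
  have e2' : a2 * b0 = 9%:R - a0 * b2 by rewrite -e2; ring.
  rewrite e2' in hp. have := sqr_ge0 (2%:R * (a0 * b2) - 9%:R). nra.
- rewrite subr_eq0 => /eqP h.
  move: hp; rewrite h => hp.
  by move/eqP: (no_sqrt27 (a0 * b2)); apply; rewrite expr2.
Qed.
Section Spec.
Variable h : 'I_3 -> {poly rat}.
Hypothesis hs : forall i, (size (h i) <= 2)%N.

Definition phi (p : {mpoly rat[3]}) : {poly rat} := mmap (polyC) h p.

Lemma phiM p q : phi (p * q) = phi p * phi q.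
Proof. exact: rmorphM. Qed.

Lemma size_mmap1 m : (size (mmap1 h m) <= (mdeg m).+1)%N.
Proof.
rewrite /mmap1 mdegE.
elim/big_rec2: _ => [|i y2 y1 _ ih]; first by rewrite size_poly1.
apply: leq_trans (size_mul_leq _ _) _.
have := size_exp_leq (h i) (m i).
have := hs i.
move: ih; set a := size y2; set b := size (h i ^+ m i); set c := size (h i).
move=> ih hc hb.
have hb' : (b <= (m i).+1)%N.
  apply: leq_trans hb _; rewrite ltnS; case: c hc => [|[|[|]]] //= _; lia.
lia.
Qed.

Lemma size_phi p : (size (phi p) <= msize p)%N.
Proof.
rewrite /phi /mmap big_seq.
apply: (big_ind (fun q : {poly rat} => size q <= msize p)%N).
- by rewrite size_poly0.
- move=> x y hx hy; apply: leq_trans (size_polyD _ _) _; by rewrite geq_max hx hy.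
- move=> m hm; apply: leq_trans (size_mul_leq _ _) _.
  have h1 := size_polyC_leq1 p@_m.
  have h2 := size_mmap1 m.
  apply: (leq_trans _ (msize_mdeg_lt hm)).
  apply: (@leq_trans ((1 + (mdeg m).+1).-1)); last by [].
  by rewrite -!subn1 leq_sub2r // leq_add.
Qed.

Lemma spec_sizes p a b : p = a * b -> size (phi p) = msize p -> (0 < msize p)%N ->
  size (phi a) = msize a /\ size (phi b) = msize b.
Proof.
move=> hp hsz hpos.
have pn : p != 0 by apply/eqP => p0; move: hpos; rewrite p0 msize0.
have an : a != 0 by apply/eqP => a0; move: pn; rewrite hp a0 mul0r eqxx.
have bn : b != 0 by apply/eqP => b0; move: pn; rewrite hp b0 mulr0 eqxx.
have hm := msizeM an bn.
have ha := size_phi a. have hb := size_phi b.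
have phin : phi p != 0 by rewrite -size_poly_eq0 hsz -lt0n.
have phian : phi a != 0 by apply/eqP => e; move: phin; rewrite hp phiM e mul0r eqxx.
have phibn : phi b != 0 by apply/eqP => e; move: phin; rewrite hp phiM e mulr0 eqxx.
have pa : (0 < size (phi a))%N by rewrite size_poly_gt0.
have pb : (0 < size (phi b))%N by rewrite size_poly_gt0.
have := size_mul phian phibn; rewrite -phiM -hp hsz hp hm.
move: ha hb pa pb; move: (size (phi a)) (size (phi b)) (msize a) (msize b) => x y A B.
lia.
Qed.

End Spec.

Lemma root2 (A : {poly rat}) : size A = 2%N -> exists x, A.[x] = 0.
Proof.
move=> hA.
have l0 : A`_1 != 0.
  have : lead_coef A != 0 by rewrite lead_coef_eq0 -size_poly_eq0 hA.
  by rewrite lead_coefE hA.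
exists (- A`_0 / A`_1).
rewrite horner_coef hA !big_ord_recr big_ord0 /= expr0 expr1 mulr1 add0r.
by field.
Qed.
Lemma msize_hom n d (p : {mpoly rat[n]}) : p \is d.-homog -> p != 0 -> msize p = d.+1.
Proof.
move=> hd pn; rewrite -mlead_deg //; congr S.
by apply: (dhomog_mf hd); apply: mlead_supp.
Qed.

Section PhiComp.
Variable h : 'I_3 -> {poly rat}.
Lemma phiD p q : phi h (p + q) = phi h p + phi h q. Proof. exact: rmorphD. Qed.
Lemma phiB p q : phi h (p - q) = phi h p - phi h q. Proof. exact: rmorphB. Qed.
Lemma phiN p : phi h (- p) = - phi h p. Proof. exact: rmorphN. Qed.
Lemma phiX p k : phi h (p ^+ k) = phi h p ^+ k. Proof. exact: rmorphXn. Qed.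
Lemma phiNat k : phi h (k%:R) = k%:R. Proof. exact: rmorph_nat. Qed.
Lemma phiXi i : phi h 'X_i = h i. Proof. by rewrite /phi mmapX mmap1U. Qed.
End PhiComp.
Definition phiE := (phiD, phiB, phiN, phiM, phiX, phiNat, phiXi).

Lemma irr_quad (h : 'I_3 -> {poly rat}) (hs : forall i, (size (h i) <= 2)%N) (p : {mpoly rat[3]}) :
  msize p = 3%N -> size (phi h p) = 3%N -> (forall x, (phi h p).[x] != 0) -> mirreducible p.
Proof.
move=> hm hsz hnr; split; first by rewrite hm.
move=> a b hp.
case: (leqP (msize a) 1) => ha; first by left.
case: (leqP (msize b) 1) => hb; first by right.
exfalso.
have pn : p != 0 by apply/eqP => p0; move: hm; rewrite p0 msize0.
have an : a != 0 by apply/eqP => a0; move: pn; rewrite hp a0 mul0r eqxx.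
have bn : b != 0 by apply/eqP => b0; move: pn; rewrite hp b0 mulr0 eqxx.
have hpos : (0 < msize p)%N by rewrite hm.
have hab := msizeM an bn; rewrite -hp hm in hab.
have [sa _] := @spec_sizes h hs _ _ _ hp (etrans hsz (esym hm)) hpos.
have sa2 : size (phi h a) = 2%N by rewrite sa; move: ha hb hab; move: (msize a) (msize b) => x y; lia.
have [x hx] := @root2 _ sa2.
by move: (hnr x); rewrite hp phiM hornerM hx mul0r eqxx.
Qed.

Lemma irr_quart (h : 'I_3 -> {poly rat}) (hs : forall i, (size (h i) <= 2)%N) (p : {mpoly rat[3]}) :
  msize p = 5%N -> size (phi h p) = 5%N -> (forall x, (phi h p).[x] != 0) ->
  (phi h p)`_0 = 1 -> (phi h p)`_1 = 0 -> (phi h p)`_2 = 9%:R -> (phi h p)`_3 = 0 ->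
  (phi h p)`_4 = 27%:R -> mirreducible p.
Proof.
move=> hm hsz hnr c0 c1 c2 c3 c4; split; first by rewrite hm.
move=> a b hp.
case: (leqP (msize a) 1) => ha; first by left.
case: (leqP (msize b) 1) => hb; first by right.
exfalso.
have pn : p != 0 by apply/eqP => p0; move: hm; rewrite p0 msize0.
have an : a != 0 by apply/eqP => a0; move: pn; rewrite hp a0 mul0r eqxx.
have bn : b != 0 by apply/eqP => b0; move: pn; rewrite hp b0 mulr0 eqxx.
have hpos : (0 < msize p)%N by rewrite hm.
have hab := msizeM an bn; rewrite -hp hm in hab.
have [sa sb] := @spec_sizes h hs _ _ _ hp (etrans hsz (esym hm)) hpos.
have E : phi h p = phi h a * phi h b by rewrite hp phiM.
have cases : [\/ size (phi h a) = 2%N, size (phi h b) = 2%N |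
                 size (phi h a) = 3%N /\ size (phi h b) = 3%N].
  rewrite sa sb; move: ha hb hab; move: (msize a) (msize b) => x y.
  move=> h1 h2 h3.
  have : ((x = 2 \/ y = 2) \/ (x = 3 /\ y = 3))%N by lia.
  by case=> [[]|[]] ->; [constructor 1 | constructor 2 | move=> ->; constructor 3].
case: cases => [s2|s2|[s3 t3]].
- have [x hx] := @root2 _ s2.
  by move: (hnr x); rewrite E hornerM hx mul0r eqxx.
- have [x hx] := @root2 _ s2.
  by move: (hnr x); rewrite E hornerM hx mulr0 eqxx.
- set A := phi h a in E s3; set B := phi h b in E t3.
  have A3 : A`_3 = 0 by rewrite nth_default // s3.
  have A4 : A`_4 = 0 by rewrite nth_default // s3.
  have B3 : B`_3 = 0 by rewrite nth_default // t3.
  have B4 : B`_4 = 0 by rewrite nth_default // t3.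
  rewrite E coefM !big_ord_recr big_ord0 /= add0r in c0.
  rewrite E coefM !big_ord_recr big_ord0 /= add0r in c1.
  rewrite E coefM !big_ord_recr big_ord0 /= add0r in c2.
  rewrite E coefM !big_ord_recr big_ord0 /= add0r A3 B3 mul0r mulr0 addr0 add0r in c3.
  rewrite E coefM !big_ord_recr big_ord0 /= add0r A3 B3 A4 B4 !mul0r !mulr0 !addr0 add0r in c4.
  apply: (quartic_no33 (A`_0) (A`_1) (A`_2) (B`_0) (B`_1) (B`_2)).
  + exact: c0.
  + exact: c1.
  + exact: c2.
  + exact: c3.
  + exact: c4.
Qed.
Definition h12 (i : 'I_3) : {poly rat} := nth 0 [:: 0; 1; 'X] i.
Definition h4 (i : 'I_3) : {poly rat} := nth 0 [:: - 'X; 1; 2%:P * 'X] i.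

Lemma hs12 i : (size (h12 i) <= 2)%N.
Proof.
case: i => [[|[|[|//]]] Hi]; rewrite /h12 /=.
- by rewrite size_poly0.
- by rewrite size_poly1.
- by rewrite size_polyX.
Qed.

Lemma hs4 i : (size (h4 i) <= 2)%N.
Proof.
case: i => [[|[|[|//]]] Hi]; rewrite /h4 /=.
- by rewrite size_polyN size_polyX.
- by rewrite size_poly1.
- apply: leq_trans (size_mul_leq _ _) _.
  have := size_polyC_leq1 (2%:R : rat); rewrite size_polyX; case: (size _) => [|[|]] //.
Qed.

Lemma size_lead (a : rat) n (q : {poly rat}) :
  a != 0 -> (size q <= n)%N -> size (a%:P * 'X^n + q) = n.+1.
Proof.
move=> an hq; rewrite size_addl; rewrite size_Cmul // size_polyXn //.
Qed.

Lemma size_mon (b : rat) (k : nat) : (size (b%:P * 'X^k)%R <= k.+1)%N.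
Proof.
apply: leq_trans (size_mul_leq _ _) _; rewrite size_polyXn.
have := size_polyC_leq1 b; case: (size _) => [|[|]] //.
Qed.

Lemma phiQ1 : phi h12 Q1 = 4%:R%:P * 'X^2 + ((-2)%:P * 'X^1 + 1%:P).
Proof. rewrite /Q1 /r_ /s_ /t_ !phiE /h12 /=. ring. Qed.
Lemma phiQ2 : phi h12 Q2 = 1%:P * 'X^2 + (1%:P * 'X^1 + 1%:P).
Proof. rewrite /Q2 /r_ /s_ /t_ !phiE /h12 /=. ring. Qed.
Lemma phiQ4 : phi h4 Q4 = 27%:R%:P * 'X^4 + (9%:R%:P * 'X^2 + 1%:P).
Proof. rewrite /Q4 /r_ /s_ /t_ !phiE /h4 /=. ring. Qed.
Lemma phiL : phi h12 (- s_) = -1.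
Proof. by rewrite /s_ !phiE /h12 /=. Qed.

Lemma szQ1 : size (phi h12 Q1) = 3%N.
Proof.
rewrite phiQ1 size_lead //; apply: leq_trans (size_polyD _ _) _.
by rewrite geq_max; apply/andP; split; [apply: (leq_trans (size_mon _ _)) | apply: (leq_trans (size_polyC_leq1 _))].
Qed.
Lemma szQ2 : size (phi h12 Q2) = 3%N.
Proof.
rewrite phiQ2 size_lead //; apply: leq_trans (size_polyD _ _) _.
by rewrite geq_max; apply/andP; split; [apply: (leq_trans (size_mon _ _)) | apply: (leq_trans (size_polyC_leq1 _))].
Qed.
Lemma szQ4 : size (phi h4 Q4) = 5%N.
Proof.
rewrite phiQ4 size_lead //; apply: leq_trans (size_polyD _ _) _.
by rewrite geq_max; apply/andP; split; [apply: (leq_trans (size_mon _ _)) | apply: (leq_trans (size_polyC_leq1 _))].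
Qed.

Lemma nzphi h p : phi h p != 0 -> p != 0.
Proof. by apply: contraNneq => ->; rewrite /phi rmorph0. Qed.

Lemma msQ1 : msize Q1 = 3%N.
Proof. by rewrite (@msize_hom _ _ _ hom_Q1) // (@nzphi h12) // -size_poly_eq0 szQ1. Qed.
Lemma msQ2 : msize Q2 = 3%N.
Proof. by rewrite (@msize_hom _ _ _ hom_Q2) // (@nzphi h12) // -size_poly_eq0 szQ2. Qed.
Lemma msQ4 : msize Q4 = 5%N.
Proof. by rewrite (@msize_hom _ _ _ hom_Q4) // (@nzphi h4) // -size_poly_eq0 szQ4. Qed.
Lemma msL : msize (- s_) = 2%N.
Proof. by rewrite (@msize_hom _ _ _ hom_L) // (@nzphi h12) // phiL oppr_eq0 oner_eq0. Qed.

Lemma irrQ1 : mirreducible Q1.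
Proof.
apply: (@irr_quad h12 hs12 Q1 msQ1 szQ1) => x.
rewrite phiQ1 !(hornerD, hornerM, hornerC, hornerXn, hornerX); apply/eqP => e.
have {}e : 4%:R * x ^+ 2 - 2%:R * x + 1 = 0 by rewrite -[RHS]e; ring.
have h0 : 4%:R * x ^+ 2 - 2%:R * x + 1 = (2%:R * x - 2%:R^-1) ^+ 2 + 3%:R / 4%:R by field.
move: e; rewrite h0 => /eqP; rewrite gt_eqF // ltr_wpDl ?sqr_ge0 ?divr_gt0 ?ltr0n //.
Qed.
Lemma irrQ2 : mirreducible Q2.
Proof.
apply: (@irr_quad h12 hs12 Q2 msQ2 szQ2) => x.
rewrite phiQ2 !(hornerD, hornerM, hornerC, hornerXn, hornerX); apply/eqP => e.
have {}e : x ^+ 2 + x + 1 = 0 by rewrite -[RHS]e; ring.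
have h0 : x ^+ 2 + x + 1 = (x + 2%:R^-1) ^+ 2 + 3%:R / 4%:R by field.
move: e; rewrite h0 => /eqP; rewrite gt_eqF // ltr_wpDl ?sqr_ge0 ?divr_gt0 ?ltr0n //.
Qed.
Lemma irrQ4 : mirreducible Q4.
Proof.
apply: (@irr_quart h4 hs4 Q4 msQ4 szQ4); rewrite ?phiQ4.
- move=> x; rewrite !(hornerD, hornerM, hornerC, hornerXn, hornerX); apply/eqP => e.
  have {}e : 27%:R * x ^+ 4 + 9%:R * x ^+ 2 + 1 = 0 by rewrite -[RHS]e; ring.
  have h1 := sqr_ge0 x. have h2 := sqr_ge0 (x ^+ 2).
  rewrite -exprM /= in h2. lra.
all: by rewrite !coefE.
Qed.
Lemma irrL : mirreducible (- s_).
Proof.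
split; first by rewrite msL.
move=> a b hp.
have pn : (- s_) != 0 by rewrite -msize_poly_eq0 msL.
have an : a != 0 by apply/eqP => a0; move: pn; rewrite hp a0 mul0r eqxx.
have bn : b != 0 by apply/eqP => b0; move: pn; rewrite hp b0 mulr0 eqxx.
have hab := msizeM an bn; rewrite -hp msL in hab.
have ha : (0 < msize a)%N by rewrite lt0n msize_poly_eq0.
have hb : (0 < msize b)%N by rewrite lt0n msize_poly_eq0.
move: ha hb hab; move: (msize a) (msize b) => x y; lia.
Qed.
Section MevalC.
Context (n : nat) (v : 'I_n -> rat).
Lemma eM (p q : {mpoly rat[n]}) : meval v (p * q) = meval v p * meval v q.
Proof. exact: mevalM. Qed.
Lemma eX (p : {mpoly rat[n]}) k : meval v (p ^+ k) = meval v p ^+ k.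
Proof. exact: rmorphXn. Qed.
Lemma eNat k : meval v (k%:R : {mpoly rat[n]}) = k%:R.
Proof. exact: rmorph_nat. Qed.
End MevalC.
Definition eE := (mevalD, mevalB, mevalN, eM, eX, eNat, mevalXU, meval1).

Definition v3 (i : 'I_3) : rat := nth 0 [:: 0; 0; 1] i.
Definition v4 (i : 'I_4) : rat := nth 0 [:: 1; 0; 0; 1] i.

Lemma lam_nz : lam != 0.
Proof.
apply/eqP => h; have := congr1 (meval v3) h.
rewrite meval0 /lam /r_ /s_ /t_ !eE /v3 /=.
by move/eqP.
Qed.

Lemma mu_nd : ~ (exists q, mu = q * S1form).
Proof.
move=> [q h]; have := congr1 (meval v4) h.
have hS : meval v4 S1form = 0 by rewrite /S1form !eE /v4 /=; apply/eqP.
rewrite eM hS mulr0 /mu /W4 /X4 /Y4 /Z4 !eE /v4 /=.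
by move/eqP.
Qed.

Lemma ord3E (P : 'I_3 -> Prop) : P 0 -> P 1 -> P 2%:R -> forall i, P i.
Proof.
move=> p0 p1 p2 [[|[|[|//]]] Hi].
- by rewrite (_ : Ordinal Hi = 0) //; apply: val_inj.
- by rewrite (_ : Ordinal Hi = 1) //; apply: val_inj.
- by rewrite (_ : Ordinal Hi = 2%:R) //; apply: val_inj.
Qed.
Lemma ord4E (P : 'I_4 -> Prop) : P 0 -> P 1 -> P 2%:R -> P 3%:R -> forall i, P i.
Proof.
move=> p0 p1 p2 p3 [[|[|[|[|//]]]] Hi].
- by rewrite (_ : Ordinal Hi = 0) //; apply: val_inj.
- by rewrite (_ : Ordinal Hi = 1) //; apply: val_inj.
- by rewrite (_ : Ordinal Hi = 2%:R) //; apply: val_inj.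
- by rewrite (_ : Ordinal Hi = 3%:R) //; apply: val_inj.
Qed.

Theorem mainTheorem19 :
  birational_onto_hypersurface param S1form /\
  exists L Q1 Q2 Q4 : {mpoly rat[3]},
    [/\ (msize L = 2 /\ msize Q1 = 3 /\ msize Q2 = 3 /\ msize Q4 = 5)%N,
        mirreducible L /\ mirreducible Q1 /\ mirreducible Q2 /\ mirreducible Q4
      & wP ^+ 3 + xP ^+ 3 = L * Q1 * Q2 * Q4].
Proof.
split.
- split.
    exists 3%N; apply: ord4E; [exact: hom_w | exact: hom_x | exact: hom_y | exact: hom_z].
  split; first exact: S1_param.
  exists 2%N, Gt, lam, mu; split.
  + by apply: ord3E; [exact: hom_G0 | exact: hom_G1 | exact: hom_G2].
  + exact: lam_nz.
  + exact: mu_nd.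
  + by apply: ord3E; [exact: G0_param | exact: G1_param | exact: G2_param].
  + apply: ord4E; [exists q0; exact: w_G | exists q1; exact: x_G
                  | exists q2; exact: y_G | exists q3; exact: z_G].
- exists (- s_), Q1, Q2, Q4; split.
  + by rewrite msL msQ1 msQ2 msQ4.
  + by split; [exact: irrL | split; [exact: irrQ1 | split; [exact: irrQ2 | exact: irrQ4]]].
  + exact: fact.
Qed.
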